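(* For all $\mathbf z,\mathbf w\in\mathbb C^m\setminus\{0\}$, setting $\boldsymbol\alpha=\rho_{(n,m)}(\mathbf z)$ and $\boldsymbol\beta=\rho_{(n,m)}(\mathbf w)$, $$\mathbf Q_m^{(\hbar)}(\mathbf z,\mathbf w)=\Gamma\Big(\tfrac{n-1}{2}\Big)\Big(\frac{\boldsymbol\alpha\cdot\boldsymbol\beta}{2\hbar^2}\Big)^{\frac{3-n}{4}}\mathbf I_{\frac{n-3}{2}}\Big(\frac{\sqrt{2\,\boldsymbol\alpha\cdot\boldsymbol\beta}}{\hbar}\Big),$$ where $\mathbf I_\nu$ is the modified Bessel function of the first kind of order $\nu$, and the square root is the branch $\sqrt z=|z|^{1/2}e^{i\theta/2}$ with $\theta=\operatorname{Arg}z\in(-\pi,\pi)$ (the right-hand side being understood via the power series of $\mathbf I_\nu$, so that it is an entire function of $\boldsymbol\alpha\cdot\boldsymbol\beta$). Consequently $\langle \Phi^{(\hbar)}_{\boldsymbol\beta},\Phi^{(\hbar)}_{\boldsymbol\alpha}\rangle_{S^n}$ equals the same expression.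
   Context: Throughout, $(n,m)$ is one of $(2,2),(3,4),(5,8)$ and $\hbar>0$ is a parameter. For $\mathbf z,\mathbf w\in\mathbb C^k$ write $\mathbf z\cdot\mathbf w=\sum_{s=1}^k z_s\overline{w_s}$. The map $\rho_{(n,m)}=(\rho_1,\dots,\rho_{n+1}):\mathbb C^m\to\mathbb C^{n+1}$ is defined by: for $(2,2)$: $\rho_1=\tfrac12(z_2^2-z_1^2)$, $\rho_2=\tfrac{i}{2}(z_1^2+z_2^2)$, $\rho_3=z_1z_2$; for $(3,4)$: $\rho_1=z_1z_3+z_2z_4$, $\rho_2=i(z_1z_3-z_2z_4)$, $\rho_3=i(z_1z_4+z_2z_3)$, $\rho_4=z_1z_4-z_2z_3$; for $(5,8)$: $\rho_1=i(-z_1z_6+z_3z_8+z_2z_5-z_4z_7)$, $\rho_2=z_1z_6+z_3z_8+z_2z_5+z_4z_7$, $\rho_3=z_2z_6+z_3z_7-z_1z_5-z_4z_8$, $\rho_4=i(-z_1z_5+z_4z_8-z_2z_6+z_3z_7)$, $\rho_5=i(-z_1z_8-z_2z_7-z_3z_6-z_4z_5)$, $\rho_6=z_1z_8+z_2z_7-z_3z_6-z_4z_5$. $S^n\subset\mathbb R^{n+1}$ is the unit sphere with normalized surface measure $d\Omega$ and $\langle\phi,\psi\rangle_{S^n}=\int_{S^n}\phi\overline\psi\,d\Omega$. For $\boldsymbol\alpha\in\mathbb C^{n+1}$ the coherent state is $\Phi^{(\hbar)}_{\boldsymbol\alpha}(\mathbf x)=\sum_{\ell\ge0}\frac{\sqrt{2\ell+n-1}}{\ell!\sqrt{n-1}}\big(\frac{\mathbf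 x\cdot\boldsymbol\alpha}{\hbar}\big)^\ell$, $\mathbf x\in S^n$. The kernels $\mathbf Q^{(\hbar)}_m$ are defined by $\mathbf Q^{(\hbar)}_m(\mathbf z,\mathbf w)=\langle \Phi^{(\hbar)}_{\rho_{(n,m)}(\mathbf w)},\Phi^{(\hbar)}_{\rho_{(n,m)}(\mathbf z)}\rangle_{S^n}$; explicitly $\mathbf Q_2^{(\hbar)}(\mathbf z,\mathbf w)=\sum_{k\ge0}\frac{(z_1\overline{w_1}+z_2\overline{w_2})^{2k}}{(2k)!\hbar^{2k}}$, $\mathbf Q_4^{(\hbar)}(\mathbf z,\mathbf w)=\sum_{k\ge0}\frac{(z_1\overline{w_1}+z_2\overline{w_2})^{k}(z_3\overline{w_3}+z_4\overline{w_4})^{k}}{(k!)^2\hbar^{2k}}$, $\mathbf Q_8^{(\hbar)}(\mathbf z,\mathbf w)=\sum_{k\ge0}\frac{\varrho(\mathbf z,\mathbf w)^k}{k!(k+1)!\hbar^{2k}}$, with $\varrho(\mathbf u,\mathbf v)=[u_1\overline{v_1}+u_2\overline{v_2}+u_3\overline{v_3}+u_4\overline{v_4}][u_5\overline{v_5}+u_6\overline{v_6}+u_7\overline{v_7}+u_8\overline{v_8}]+[u_7\overline{v_1}-u_8\overline{v_2}+u_5\overline{v_3}-u_6\overline{v_4}][u_2\overline{v_8}-u_3\overline{v_5}+u_4\overline{v_6}-u_1\overline{v_7}]$. *)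

(* Defs.v *)
From Stdlib Require Import Reals Lra Arith Factorial ClassicalEpsilon.
Open Scope R_scope.

Definition C := (R * R)%type.
Definition C0 : C := (0, 0).
Definition C1 : C := (1, 0).
Definition Ci : C := (0, 1).
Definition RtoC (r : R) : C := (r, 0).
Definition Cadd (u v : C) : C := (fst u + fst v, snd u + snd v).
Definition Copp (u : C) : C := (- fst u, - snd u).
Definition Csub (u v : C) : C := Cadd u (Copp v).
Definition Cmul (u v : C) : C :=
  (fst u * fst v - snd u * snd v, fst u * snd v + snd u * fst v).
Definition Cconj (u : C) : C := (fst u, - snd u).
Definition Cscale (r : R) (u : C) : C := (r * fst u, r * snd u).
Fixpoint Cpow (u : C) (k : nat) : C :=
  match k with O => C1 | S k' => Cmul u (Cpow u k') end.

Fixpoint Csum1 (f : nat -> C) (k : nat) : C :=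
  match k with O => C0 | S k' => Cadd (Csum1 f k') (f k) end.

Definition Cseries (f : nat -> C) (l : C) : Prop :=
  infinite_sum (fun k => fst (f k)) (fst l) /\
  infinite_sum (fun k => snd (f k)) (snd l).

(* Vectors of C^k are functions nat -> C, indexed 1..k (other indices ignored). *)
Definition Cvec := nat -> C.

Definition cdot (k : nat) (z w : Cvec) : C :=
  Csum1 (fun s => Cmul (z s) (Cconj (w s))) k.

Definition Cvec_nonzero (k : nat) (z : Cvec) : Prop :=
  exists s, (1 <= s <= k)%nat /\ z s <> C0.

(* ---------- Gamma function (Gauss' limit formula, valid for s > 0) ---------- *)
Definition gauss_gamma_seq (s : R) (N : nat) : R :=
  INR (fact N) * Rpower (INR N) s / prod_f_R0 (fun j => s + INR j) N.
Definition Gamma (s : R) : R :=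
  epsilon (inhabits 0) (fun g => Un_cv (gauss_gamma_seq s) g).

(* I_nu(t) = sum_k (t/2)^{2k+nu} / (k! Gamma(k+nu+1)).  The expression
   (y)^{-nu/2} I_nu(2 sqrt y), understood via this power series, is the entire
   function  sum_k y^k / (k! Gamma(k+nu+1)). *)
Definition besselI_reg_term (nu : R) (y : C) (k : nat) : C :=
  Cscale (/ (INR (fact k) * Gamma (INR k + nu + 1))) (Cpow y k).

Inductive nm_case := NM22 | NM34 | NM58.
Definition n_of (c : nm_case) : nat := match c with NM22 => 2 | NM34 => 3 | NM58 => 5 end.
Definition m_of (c : nm_case) : nat := match c with NM22 => 2 | NM34 => 4 | NM58 => 8 end.

Definition half : C := (/2, 0).

(* rho_(n,m) : C^m -> C^(n+1), components indexed 1..n+1 *)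
Definition rho (c : nm_case) (z : Cvec) : Cvec := fun j =>
  let z1 := z 1%nat in let z2 := z 2%nat in let z3 := z 3%nat in let z4 := z 4%nat in
  let z5 := z 5%nat in let z6 := z 6%nat in let z7 := z 7%nat in let z8 := z 8%nat in
  match c with
  | NM22 =>
    match j with
    | 1%nat => Cmul half (Csub (Cmul z2 z2) (Cmul z1 z1))
    | 2%nat => Cmul (Cmul Ci half) (Cadd (Cmul z1 z1) (Cmul z2 z2))
    | 3%nat => Cmul z1 z2
    | _ => C0 end
  | NM34 =>
    match j with
    | 1%nat => Cadd (Cmul z1 z3) (Cmul z2 z4)
    | 2%nat => Cmul Ci (Csub (Cmul z1 z3) (Cmul z2 z4))
    | 3%nat => Cmul Ci (Cadd (Cmul z1 z4) (Cmul z2 z3))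
    | 4%nat => Csub (Cmul z1 z4) (Cmul z2 z3)
    | _ => C0 end
  | NM58 =>
    match j with
    | 1%nat => Cmul Ci (Csub (Cadd (Cadd (Copp (Cmul z1 z6)) (Cmul z3 z8)) (Cmul z2 z5)) (Cmul z4 z7))
    | 2%nat => Cadd (Cadd (Cadd (Cmul z1 z6) (Cmul z3 z8)) (Cmul z2 z5)) (Cmul z4 z7)
    | 3%nat => Csub (Csub (Cadd (Cmul z2 z6) (Cmul z3 z7)) (Cmul z1 z5)) (Cmul z4 z8)
    | 4%nat => Cmul Ci (Cadd (Csub (Cadd (Copp (Cmul z1 z5)) (Cmul z4 z8)) (Cmul z2 z6)) (Cmul z3 z7))
    | 5%nat => Cmul Ci (Csub (Csub (Csub (Copp (Cmul z1 z8)) (Cmul z2 z7)) (Cmul z3 z6)) (Cmul z4 z5))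
    | 6%nat => Csub (Csub (Cadd (Cmul z1 z8) (Cmul z2 z7)) (Cmul z3 z6)) (Cmul z4 z5)
    | _ => C0 end
  end.

Definition pc (u v : Cvec) (i j : nat) : C := Cmul (u i) (Cconj (v j)).

Definition varrho (u v : Cvec) : C :=
  Cadd
    (Cmul (Cadd (Cadd (Cadd (pc u v 1 1) (pc u v 2 2)) (pc u v 3 3)) (pc u v 4 4))
          (Cadd (Cadd (Cadd (pc u v 5 5) (pc u v 6 6)) (pc u v 7 7)) (pc u v 8 8)))
    (Cmul (Csub (Cadd (Csub (pc u v 7 1) (pc u v 8 2)) (pc u v 5 3)) (pc u v 6 4))
          (Csub (Cadd (Csub (pc u v 2 8) (pc u v 3 5)) (pc u v 4 6)) (pc u v 1 7))).

Definition Q_term (c : nm_case) (hbar : R) (z w : Cvec) (k : nat) : C :=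
  match c with
  | NM22 =>
      Cscale (/ (INR (fact (2 * k)) * hbar ^ (2 * k)))
             (Cpow (Cadd (pc z w 1 1) (pc z w 2 2)) (2 * k))
  | NM34 =>
      Cscale (/ ((INR (fact k)) ^ 2 * hbar ^ (2 * k)))
             (Cmul (Cpow (Cadd (pc z w 1 1) (pc z w 2 2)) k)
                   (Cpow (Cadd (pc z w 3 3) (pc z w 4 4)) k))
  | NM58 =>
      Cscale (/ (INR (fact k) * INR (fact (k + 1)) * hbar ^ (2 * k)))
             (Cpow (varrho z w) k)
  end.

Definition Q_value (c : nm_case) (hbar : R) (z w : Cvec) (q : C) : Prop :=
  Cseries (Q_term c hbar z w) q.

(* Main.v *)
Require Import Defs.
From Stdlib Require Import Reals Lra Lia Psatz Factorial ClassicalEpsilon ZArith.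
Open Scope R_scope.
Ltac cunf := cbv [cdot Csum1 rho pc Cmul Cadd Csub Copp Cconj Cscale C0 C1 Ci half fst snd].
Lemma x22 z w : cdot 3 (rho NM22 z) (rho NM22 w) =
  Cscale (/2) (Cmul (Cadd (pc z w 1 1) (pc z w 2 2)) (Cadd (pc z w 1 1) (pc z w 2 2))).
Proof. cunf. f_equal; field. Qed.
Lemma x34 z w : cdot 4 (rho NM34 z) (rho NM34 w) =
  Cscale 2 (Cmul (Cadd (pc z w 1 1) (pc z w 2 2)) (Cadd (pc z w 3 3) (pc z w 4 4))).
Proof. cunf. f_equal; ring. Qed.
Lemma x58 z w : cdot 6 (rho NM58 z) (rho NM58 w) = Cscale 2 (varrho z w).
Proof. unfold varrho. cunf. f_equal; ring. Qed.

Lemma isum_Un a l : infinite_sum a l <-> Un_cv (fun N => sum_f_R0 a N) l.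
Proof. split; intro H; exact H. Qed.

Lemma Un_cv_ext u v l : (forall n, u n = v n) -> Un_cv u l -> Un_cv v l.
Proof. intros E H eps He. destruct (H eps He) as [N HN]. exists N. intros n Hn. rewrite <- E. auto. Qed.

Lemma Un_cv_const c : Un_cv (fun _ => c) c.
Proof. intros eps He. exists 0%nat. intros. unfold R_dist. rewrite Rminus_diag, Rabs_R0. lra. Qed.

Lemma isum_ext a b l : (forall k, a k = b k) -> infinite_sum a l -> infinite_sum b l.
Proof. intros E H. apply isum_Un. apply isum_Un in H. eapply Un_cv_ext; [|exact H].
  intro n. simpl. apply sum_eq. intros; auto. Qed.

Lemma isum_scal a l c : infinite_sum a l -> infinite_sum (fun k => c * a k) (c * l).
Proof. intro H. apply isum_Un. apply isum_Un in H.
  eapply Un_cv_ext; [| apply (CV_mult _ _ _ _ (Un_cv_const c) H)].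
  intro n. simpl. rewrite scal_sum. apply sum_eq. intros; ring. Qed.

Lemma abs_conv (g b : nat -> R) lb : (forall k, Rabs (g k) <= b k) -> infinite_sum b lb ->
  exists l, infinite_sum g l.
Proof.
  intros Hb Hs.
  destruct (Rseries_CV_comp (fun k => Rabs (g k)) b) as [l1 H1].
  { intro n. split; [apply Rabs_pos | auto]. }
  { exists lb. exact Hs. }
  destruct (Rseries_CV_comp (fun k => Rabs (g k) + g k) (fun k => 2 * b k)) as [l2 H2].
  { intro n. specialize (Hb n). pose proof (Rle_abs (g n)). pose proof (Rle_abs (- g n)).
    rewrite Rabs_Ropp in H0. split; lra. }
  { exists (2 * lb). exact (isum_scal _ _ 2 Hs). }
  exists (l2 - l1). apply isum_Un.
  eapply Un_cv_ext; [| apply (CV_minus _ _ _ _ H2 H1)].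
  intro n. simpl. rewrite <- minus_sum. apply sum_eq. intros; ring.
Qed.

Definition n1 (u : Defs.C) : R := Rabs (fst u) + Rabs (snd u).
Lemma n1_ge0 u : 0 <= n1 u.
Proof. unfold n1. pose proof (Rabs_pos (fst u)); pose proof (Rabs_pos (snd u)); lra. Qed.
Lemma n1_mul u v : n1 (Cmul u v) <= n1 u * n1 v.
Proof.
  destruct u as [a b]; destruct v as [c d]. unfold n1, Cmul; simpl.
  pose proof (Rabs_triang (a*c) (- (b*d))). pose proof (Rabs_triang (a*d) (b*c)).
  rewrite Rabs_Ropp in H. rewrite !Rabs_mult in H, H0. unfold Rminus.
  pose proof (Rabs_pos a); pose proof (Rabs_pos b); pose proof (Rabs_pos c); pose proof (Rabs_pos d).
  nra.
Qed.
Lemma n1_pow u k : n1 (Cpow u k) <= n1 u ^ k.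
Proof.
  induction k; simpl.
  - unfold n1, Defs.C1; simpl. rewrite Rabs_R1, Rabs_R0. lra.
  - eapply Rle_trans; [apply n1_mul|]. apply Rmult_le_compat_l; [apply n1_ge0| auto].
Qed.
Lemma n1_scale r u : n1 (Cscale r u) = Rabs r * n1 u.
Proof. destruct u; unfold n1, Cscale; simpl. rewrite !Rabs_mult. ring. Qed.

Lemma fst_n1 u : Rabs (fst u) <= n1 u.
Proof. unfold n1. pose proof (Rabs_pos (snd u)); lra. Qed.
Lemma snd_n1 u : Rabs (snd u) <= n1 u.
Proof. unfold n1. pose proof (Rabs_pos (fst u)); lra. Qed.

Lemma cseries_bound f M : (forall k, n1 (f k) <= M ^ k / INR (fact k)) -> exists l, Cseries f l.
Proof.
  intro H. destruct (exist_exp M) as [lM HM]. unfold exp_in in HM.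
  assert (Hb : infinite_sum (fun k => M ^ k / INR (fact k)) lM).
  { eapply isum_ext; [|exact HM]. intro k; simpl. unfold Rdiv; ring. }
  destruct (abs_conv (fun k => fst (f k)) _ _ (fun k => Rle_trans _ _ _ (fst_n1 (f k)) (H k)) Hb) as [l1 H1].
  destruct (abs_conv (fun k => snd (f k)) _ _ (fun k => Rle_trans _ _ _ (snd_n1 (f k)) (H k)) Hb) as [l2 H2].
  exists (l1, l2). split; assumption.
Qed.

Lemma main_gen f g (G : R) q : G <> 0 -> (forall k, f k = Cscale G (g k)) -> Cseries f q ->
  exists L, Cseries g L /\ q = Cscale G L.
Proof.
  intros HG E [H1 H2]. exists (Cscale (/G) q). split.
  - split; simpl.
    + replace (/G * fst q) with (/G * fst q) by ring.
      eapply isum_ext; [| exact (isum_scal _ _ (/G) H1)]. intro k. simpl. rewrite E. simpl. field. auto.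
    + eapply isum_ext; [| exact (isum_scal _ _ (/G) H2)]. intro k. simpl. rewrite E. simpl. field. auto.
  - destruct q; unfold Cscale; simpl. f_equal; field; auto.
Qed.

Lemma final_gen c hbar z w (G : R) y : G <> 0 ->
  (forall k, Q_term c hbar z w k = Cscale G (besselI_reg_term ((INR (n_of c) - 3) / 2) y k)) ->
  (exists M, forall k, n1 (Q_term c hbar z w k) <= M ^ k / INR (fact k)) ->
  exists q L : Defs.C, Q_value c hbar z w q /\ Cseries (besselI_reg_term ((INR (n_of c) - 3) / 2) y) L /\ q = Cscale G L.
Proof.
  intros HG E [M HM]. destruct (cseries_bound _ _ HM) as [q Hq].
  destruct (main_gen _ _ _ _ HG E Hq) as [L [HL1 HL2]].
  exists q, L. auto.
Qed.


Lemma Un_cv_shift u l : Un_cv (fun n => u (S n)) l -> Un_cv u l.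
Proof. intros H eps He. destruct (H eps He) as [N HN]. exists (S N). intros n Hn.
  destruct n; [lia|]. apply HN. lia. Qed.

Lemma Un_cv_eq_ge1 u v l : (forall n, (1 <= n)%nat -> u n = v n) -> Un_cv u l -> Un_cv v l.
Proof. intros E H eps He. destruct (H eps He) as [N HN]. exists (S N). intros n Hn.
  rewrite <- E by lia. apply HN. lia. Qed.

Lemma Un_cv_lb u l c : Un_cv u l -> (forall n, c <= u n) -> c <= l.
Proof. intros H Hc. destruct (Rle_or_lt c l) as [|Hlt]; auto.
  destruct (H (c - l)) as [N HN]; [lra|]. specialize (HN N (le_n _)). specialize (Hc N).
  unfold R_dist in HN. pose proof (Rle_abs (u N - l)). lra. Qed.

Lemma lim_ratio a : 0 < a -> Un_cv (fun N => INR N / (INR N + a)) 1.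
Proof.
  intros Ha eps He.
  destruct (archimed (a / eps)) as [H1 _].
  assert (Hpos : 0 < a / eps) by (apply Rdiv_lt_0_compat; auto).
  assert (Hz : (0 <= up (a/eps))%Z) by (apply le_IZR; lra).
  exists (Z.to_nat (up (a / eps))). intros n Hn.
  assert (Hn' : a / eps < INR n).
  { apply le_INR in Hn. rewrite INR_IZR_INZ, Z2Nat.id in Hn by auto. lra. }
  pose proof (pos_INR n).
  unfold R_dist. replace (INR n / (INR n + a) - 1) with (- (a / (INR n + a))) by (field; lra).
  rewrite Rabs_Ropp, Rabs_right by (apply Rle_ge, Rlt_le, Rdiv_lt_0_compat; lra).
  assert (a < eps * INR n).
  { apply (Rmult_lt_compat_l eps) in Hn'; auto. replace (eps * (a/eps)) with a in Hn' by (field; lra). lra. }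
  apply (Rmult_lt_reg_r (INR n + a)); [lra|].
  replace (a / (INR n + a) * (INR n + a)) with a by (field; lra). nra.
Qed.

Definition gs := gauss_gamma_seq.

Lemma prod_S f N : prod_f_R0 f (S N) = prod_f_R0 f N * f (S N).
Proof. reflexivity. Qed.

Lemma prod_pos s N : 0 < s -> 0 < prod_f_R0 (fun j => s + INR j) N.
Proof. intro Hs. induction N.
  - simpl. lra.
  - rewrite prod_S. pose proof (pos_INR (S N)). apply Rmult_lt_0_compat; lra. Qed.

Lemma prod_shift s N : prod_f_R0 (fun j => s + 1 + INR j) N * s = prod_f_R0 (fun j => s + INR j) N * (s + INR N + 1).
Proof. induction N.
  - simpl. ring.
  - rewrite !prod_S, S_INR.
    replace (prod_f_R0 (fun j : nat => s + 1 + INR j) N * (s + 1 + (INR N + 1)) * s)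
      with (prod_f_R0 (fun j : nat => s + 1 + INR j) N * s * (s + 1 + (INR N + 1))) by ring.
    rewrite IHN. ring. Qed.

Lemma gs_succ s N : 0 < s -> (1 <= N)%nat -> gs (s + 1) N = gs s N * (s * (INR N / (INR N + (s + 1)))).
Proof.
  intros Hs HN. unfold gs, gauss_gamma_seq.
  assert (HNp : 0 < INR N) by (apply lt_0_INR; lia).
  rewrite Rpower_plus, Rpower_1 by auto.
  pose proof (prod_shift s N) as E. pose proof (prod_pos s N Hs) as P.
  pose proof (prod_pos (s+1) N ltac:(lra)) as P'.
  set (A := prod_f_R0 (fun j => s + 1 + INR j) N) in *.
  set (B := prod_f_R0 (fun j => s + INR j) N) in *.
  assert (A = B * (s + INR N + 1) / s) by (apply (Rmult_eq_reg_r s); [rewrite E; field|]; lra).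
  change (prod_f_R0 (fun j : nat => s + 1 + INR j) N) with A. rewrite H.
  field. repeat split; lra.
Qed.

Lemma Gamma_cv s : (exists g, Un_cv (gs s) g) -> Un_cv (gs s) (Gamma s).
Proof. intro H. unfold Gamma. apply (epsilon_spec (inhabits 0) (fun g => Un_cv (gauss_gamma_seq s) g)). exact H. Qed.

Lemma Gamma_succ s : 0 < s -> (exists g, Un_cv (gs s) g) ->
  (exists g, Un_cv (gs (s + 1)) g) /\ Gamma (s + 1) = s * Gamma s.
Proof.
  intros Hs Hc.
  assert (C1 : Un_cv (gs (s+1)) (Gamma s * (s * 1))).
  { eapply Un_cv_eq_ge1; [| apply (CV_mult _ _ _ _ (Gamma_cv s Hc) (CV_mult _ _ _ _ (Un_cv_const s) (lim_ratio (s+1) ltac:(lra))))].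
    intros n Hn. simpl. symmetry. apply gs_succ; auto. }
  assert (Ex : exists g, Un_cv (gs (s+1)) g) by eauto.
  split; auto. pose proof (Gamma_cv _ Ex). rewrite (UL_sequence _ _ _ H C1). ring.
Qed.

Lemma prod_one N : prod_f_R0 (fun j => 1 + INR j) N = INR (fact (S N)).
Proof. induction N.
  - simpl. ring.
  - rewrite prod_S, IHN. change (fact (S (S N))) with (S (S N) * fact (S N))%nat.
    rewrite mult_INR, !S_INR. ring. Qed.

Lemma Gamma_one_cv : Un_cv (gs 1) 1.
Proof.
  eapply Un_cv_eq_ge1; [| apply (lim_ratio 1); lra].
  intros n Hn. unfold gs, gauss_gamma_seq. rewrite prod_one, Rpower_1 by (apply lt_0_INR; lia).
  change (fact (S n)) with (S n * fact n)%nat. rewrite mult_INR, S_INR.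
  pose proof (INR_fact_lt_0 n). pose proof (pos_INR n). field. lra.
Qed.

Lemma Gamma_nat k : (exists g, Un_cv (gs (INR k + 1)) g) /\ Gamma (INR k + 1) = INR (fact k).
Proof.
  induction k.
  - simpl. replace (0 + 1) with 1 by ring. split; [eauto using Gamma_one_cv|].
    pose proof (Gamma_cv 1 (ex_intro _ _ Gamma_one_cv)). apply (UL_sequence _ _ _ H Gamma_one_cv).
  - destruct IHk as [Hc He]. pose proof (pos_INR k).
    destruct (Gamma_succ (INR k + 1) ltac:(lra) Hc) as [Hc' He'].
    rewrite S_INR. split; auto. rewrite He', He.
    change (fact (S k)) with (S k * fact k)%nat. rewrite mult_INR, S_INR. ring.
Qed.

Lemma sq_le a b : 0 <= b -> a ^ 2 <= b ^ 2 -> a <= b.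
Proof. intros Hb H. apply Rsqr_incr_0_var; auto. unfold Rsqr. simpl in H. lra. Qed.

Definition uh n := gs (/2) (S n).

Lemma uh_eq n : uh n = INR (fact (S n)) * sqrt (INR (S n)) / prod_f_R0 (fun j => /2 + INR j) (S n).
Proof. unfold uh, gs, gauss_gamma_seq. rewrite Rpower_sqrt; auto. apply lt_0_INR. lia. Qed.

Lemma uh_pos n : 0 < uh n.
Proof. rewrite uh_eq. pose proof (INR_fact_lt_0 (S n)).
  assert (0 < sqrt (INR (S n))) by (apply sqrt_lt_R0, lt_0_INR; lia).
  pose proof (prod_pos (/2) (S n) ltac:(lra)).
  apply Rdiv_lt_0_compat; auto. apply Rmult_lt_0_compat; auto. Qed.

Lemma uh_grow : Un_growing uh.
Proof.
  intro n. rewrite !uh_eq. rewrite (prod_S _ (S n)).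
  change (fact (S (S n))) with (S (S n) * fact (S n))%nat. rewrite mult_INR.
  set (F := INR (fact (S n))). set (Q := prod_f_R0 (fun j => /2 + INR j) (S n)).
  assert (HF : 0 < F) by apply INR_fact_lt_0.
  assert (HQ : 0 < Q) by (apply prod_pos; lra).
  rewrite (S_INR (S n)). set (m := INR (S n)).
  assert (Hm : 1 <= m) by (unfold m; rewrite S_INR; pose proof (pos_INR n); lra).
  assert (Hs : sqrt m * (m + /2 + 1) <= (m + 1) * sqrt (m + 1)).
  { assert (0 <= sqrt m) by apply sqrt_pos. assert (0 <= sqrt (m+1)) by apply sqrt_pos.
    assert (Sq1 : sqrt m * sqrt m = m) by (apply sqrt_sqrt; lra).
    assert (Sq2 : sqrt (m+1) * sqrt (m+1) = m + 1) by (apply sqrt_sqrt; lra).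
    assert ((sqrt m * (m + /2 + 1))^2 <= ((m + 1) * sqrt (m + 1))^2).
    { replace ((sqrt m * (m + /2 + 1))^2) with ((sqrt m * sqrt m) * (m + /2 + 1)^2) by ring.
      replace (((m + 1) * sqrt (m + 1))^2) with ((m+1)^2 * (sqrt (m+1) * sqrt (m+1))) by ring.
      rewrite Sq1, Sq2. nra. }
    apply sq_le; auto; nra. }
  replace (/2 + (m + 1)) with (m + /2 + 1) by ring.
  apply (Rmult_le_reg_r (Q * (m + /2 + 1))); [nra|].
  replace (F * sqrt m / Q * (Q * (m + /2 + 1))) with (F * (sqrt m * (m + /2 + 1))) by (field; lra).
  replace ((m + 1) * F * sqrt (m + 1) / (Q * (m + /2 + 1)) * (Q * (m + /2 + 1))) with (F * ((m + 1) * sqrt (m + 1))) by (field; lra).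
  apply Rmult_le_compat_l; lra.
Qed.

Lemma uh_sq_bound n : INR (fact (S n)) ^ 2 * (INR (S n) + 1) <= 32 / 9 * prod_f_R0 (fun j => /2 + INR j) (S n) ^ 2.
Proof.
  induction n.
  - simpl. lra.
  - rewrite (prod_S _ (S n)). change (fact (S (S n))) with (S (S n) * fact (S n))%nat. rewrite mult_INR.
    rewrite (S_INR (S n)).
    set (F := INR (fact (S n))) in *. set (Q := prod_f_R0 (fun j => /2 + INR j) (S n)) in *.
    set (m := INR (S n)) in *.
    assert (Hm : 1 <= m) by (unfold m; rewrite S_INR; pose proof (pos_INR n); lra).
    assert (0 <= F^2) by nra.
    replace (/2 + (m + 1)) with (m + /2 + 1) by ring.
    replace (((m + 1) * F) ^ 2 * (m + 1 + 1)) with ((F^2 * (m + 1)) * ((m+1) * (m+2))) by ring.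
    replace (32 / 9 * (Q * (m + / 2 + 1)) ^ 2) with ((32/9 * Q^2) * (m + /2 + 1)^2) by ring.
    apply Rle_trans with ((32/9 * Q^2) * ((m+1)*(m+2))).
    + apply Rmult_le_compat_r; nra.
    + apply Rmult_le_compat_l; nra.
Qed.

Lemma uh_ub n : uh n <= 2.
Proof.
  pose proof (uh_pos n). pose proof (uh_sq_bound n). rewrite uh_eq in *.
  set (F := INR (fact (S n))) in *. set (Q := prod_f_R0 (fun j => /2 + INR j) (S n)) in *.
  set (m := INR (S n)) in *.
  assert (HQ : 0 < Q) by (apply prod_pos; lra).
  assert (Hm : 0 < m) by (apply lt_0_INR; lia).
  assert (Sq1 : sqrt m * sqrt m = m) by (apply sqrt_sqrt; lra).
  assert ((F * sqrt m / Q)^2 <= 4).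
  { replace ((F * sqrt m / Q)^2) with (F^2 * (sqrt m * sqrt m) / Q^2) by (field; lra).
    rewrite Sq1. apply (Rmult_le_reg_r (Q^2)); [nra|].
    replace (F ^ 2 * m / Q ^ 2 * Q ^ 2) with (F^2 * m) by (field; lra). nra. }
  apply sq_le; lra.
Qed.

Lemma Gamma_half : (exists g, Un_cv (gs (/2)) g) /\ 0 < Gamma (/2).
Proof.
  destruct (growing_cv uh uh_grow) as [g Hg].
  { exists 2. intros x [i ->]. apply uh_ub. }
  assert (Hc : Un_cv (gs (/2)) g) by (apply Un_cv_shift; exact Hg).
  assert (Ex : exists g, Un_cv (gs (/2)) g) by eauto.
  split; auto. rewrite (UL_sequence _ _ _ (Gamma_cv _ Ex) Hc).
  pose proof (uh_pos 0). eapply Rlt_le_trans; [exact H|].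
  apply (Un_cv_lb _ _ _ Hg). intro n. apply Rge_le, growing_prop; [apply uh_grow| lia].
Qed.

Lemma Gamma_halfint k : (exists g, Un_cv (gs (INR k + /2)) g) /\
  INR (fact k) * Gamma (INR k + /2) * 4 ^ k = INR (fact (2 * k)) * Gamma (/2).
Proof.
  induction k.
  - simpl. replace (0 + /2) with (/2) by ring. destruct Gamma_half. split; auto. ring.
  - destruct IHk as [Hc He]. pose proof (pos_INR k).
    destruct (Gamma_succ (INR k + /2) ltac:(lra) Hc) as [Hc' He'].
    replace (INR (S k) + /2) with (INR k + /2 + 1) by (rewrite S_INR; ring).
    split; auto. rewrite He'.
    replace (2 * S k)%nat with (S (S (2 * k))) by lia.
    change (fact (S (S (2 * k)))) with (S (S (2*k)) * (S (2 * k) * fact (2 * k)))%nat.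
    change (fact (S k)) with (S k * fact k)%nat.
    rewrite !mult_INR, !S_INR, (mult_INR 2 k).
    transitivity ((INR 2 * INR k + 1 + 1) * (INR 2 * INR k + 1) * (INR (fact (2 * k)) * Gamma (/ 2))); [| ring].
    rewrite <- He. simpl (INR 2). simpl pow. field.
Qed.

Lemma Cpow_scale r u k : Cpow (Cscale r u) k = Cscale (r ^ k) (Cpow u k).
Proof. induction k; simpl Cpow.
  - unfold Cscale, Defs.C1; simpl. f_equal; ring.
  - rewrite IHk. generalize (Cpow u k). intros [a b]. destruct u. unfold Cscale, Cmul; simpl. f_equal; ring. Qed.

Lemma Cpow_mul a b k : Cpow (Cmul a b) k = Cmul (Cpow a k) (Cpow b k).
Proof. induction k; simpl Cpow.
  - unfold Cmul, Defs.C1; simpl. f_equal; ring.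
  - rewrite IHk. generalize (Cpow a k) (Cpow b k). intros [c d] [e f]. destruct a, b. unfold Cmul; simpl. f_equal; ring. Qed.

Lemma Cpow_sq p k : Cpow (Cmul p p) k = Cpow p (2 * k).
Proof. induction k.
  - reflexivity.
  - replace (2 * S k)%nat with (S (S (2 * k))) by lia.
    change (Cpow p (S (S (2*k)))) with (Cmul p (Cmul p (Cpow p (2*k)))).
    change (Cpow (Cmul p p) (S k)) with (Cmul (Cmul p p) (Cpow (Cmul p p) k)). rewrite IHk.
    generalize (Cpow p (2 * k)). intros [c d]. destruct p. unfold Cmul; simpl. f_equal; ring. Qed.

Lemma Cscale_scale a b u : Cscale a (Cscale b u) = Cscale (a * b) u.
Proof. destruct u; unfold Cscale; simpl. f_equal; ring. Qed.

Lemma Cpow_Cscale_mul r a b k : Cpow (Cscale r (Cmul a b)) k = Cscale (r ^ k) (Cmul (Cpow a k) (Cpow b k)).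
Proof. rewrite Cpow_scale, Cpow_mul. reflexivity. Qed.

Lemma bound_gen D A hb k u : 0 < hb -> INR (fact k) <= D -> n1 u <= A ^ k ->
  n1 (Cscale (/ (D * hb ^ (2 * k))) u) <= (A / hb ^ 2) ^ k / INR (fact k).
Proof.
  intros Hh HD Hu. pose proof (INR_fact_lt_0 k) as HF.
  rewrite n1_scale, pow_mult. unfold Rdiv. rewrite Rpow_mult_distr, pow_inv.
  assert (Hhk : 0 < (hb ^ 2) ^ k) by (apply pow_lt; nra).
  set (h := (hb ^ 2) ^ k) in *. set (F := INR (fact k)) in *.
  rewrite Rabs_right by (apply Rle_ge, Rlt_le, Rinv_0_lt_compat; nra).
  pose proof (n1_ge0 u).
  apply Rle_trans with (/ (F * h) * A ^ k).
  - apply Rmult_le_compat; auto.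
    + apply Rlt_le, Rinv_0_lt_compat; nra.
    + apply Rinv_le_contravar; nra.
  - right. field. lra.
Qed.

Lemma Cscale_eq r1 r2 u : r1 = r2 -> Cscale r1 u = Cscale r2 u.
Proof. intros ->; reflexivity. Qed.

Theorem proposition2p1 :
  forall (c : nm_case) (hbar : R) (z w : Cvec),
    0 < hbar ->
    Cvec_nonzero (m_of c) z -> Cvec_nonzero (m_of c) w ->
    let nu := (INR (n_of c) - 3) / 2 in
    let x := cdot (n_of c + 1) (rho c z) (rho c w) in
    let y := Cscale (/ (2 * hbar ^ 2)) x in
    exists q L : Defs.C,
      Q_value c hbar z w q /\
      Cseries (besselI_reg_term nu y) L /\
      q = Cscale (Gamma ((INR (n_of c) - 1) / 2)) L.
Proof.
  intros c hbar z w Hh _ _. cbv zeta.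
  assert (Hh2 : 0 < hbar ^ 2) by nra.
  destruct c; apply final_gen.
  -
    replace ((INR (n_of NM22) - 1) / 2) with (/2) by (simpl; field).
    destruct Gamma_half. lra.
  - intro k. unfold Q_term, besselI_reg_term. change (n_of NM22 + 1)%nat with 3%nat.
    rewrite x22, !Cpow_scale, Cpow_sq, !Cscale_scale. apply Cscale_eq.
    replace ((INR (n_of NM22) - 1) / 2) with (/2) by (simpl; field).
    replace (INR k + (INR (n_of NM22) - 3) / 2 + 1) with (INR k + /2) by (simpl; field).
    destruct (Gamma_halfint k) as [_ Hk].
    replace (4 ^ k) with (2 ^ k * 2 ^ k) in Hk by (rewrite <- Rpow_mult_distr; f_equal; ring).
    rewrite !pow_inv, Rpow_mult_distr, pow_mult.
    assert (Ht : 0 < 2 ^ k) by (apply pow_lt; lra).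
    assert (Hhk : 0 < (hbar ^ 2) ^ k) by (apply pow_lt; nra).
    pose proof (INR_fact_lt_0 k). pose proof (INR_fact_lt_0 (2 * k)).
    destruct Gamma_half as [_ HG].
    set (t := 2 ^ k) in *. set (h := (hbar ^ 2) ^ k) in *.
    set (F := INR (fact k)) in *. set (F2 := INR (fact (2 * k))) in *.
    set (Gk := Gamma (INR k + /2)) in *. set (G := Gamma (/2)) in *.
    assert (HGk : Gk <> 0) by (intro E; rewrite E in Hk; nra).
    assert (EG : G = F * Gk * t * t / F2) by (apply (Rmult_eq_reg_r F2); [replace (F*Gk*t*t/F2*F2) with (F*Gk*(t*t)) by (field; lra); rewrite Hk; ring | lra]).
    rewrite EG. field. repeat split; lra.
  - exists (n1 (Cadd (pc z w 1 1) (pc z w 2 2)) ^ 2 / hbar ^ 2). intro k.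
    unfold Q_term. apply bound_gen; auto.
    + apply le_INR, fact_le. lia.
    + rewrite <- pow_mult. apply n1_pow.
  -
    replace ((INR (n_of NM34) - 1) / 2) with (INR 0 + 1) by (simpl; field).
    rewrite (proj2 (Gamma_nat 0)). simpl. lra.
  - intro k. unfold Q_term, besselI_reg_term. change (n_of NM34 + 1)%nat with 4%nat.
    rewrite x34, !Cpow_scale, Cpow_mul, !Cscale_scale. apply Cscale_eq.
    replace ((INR (n_of NM34) - 1) / 2) with (INR 0 + 1) by (simpl; field).
    replace (INR k + (INR (n_of NM34) - 3) / 2 + 1) with (INR k + 1) by (simpl; field).
    rewrite (proj2 (Gamma_nat 0)), (proj2 (Gamma_nat k)).
    rewrite !pow_inv, Rpow_mult_distr, pow_mult.
    assert (Ht : 0 < 2 ^ k) by (apply pow_lt; lra).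
    assert (Hhk : 0 < (hbar ^ 2) ^ k) by (apply pow_lt; nra).
    pose proof (INR_fact_lt_0 k). simpl (INR (fact 0)). field. repeat split; lra.
  - exists (n1 (Cadd (pc z w 1 1) (pc z w 2 2)) * n1 (Cadd (pc z w 3 3) (pc z w 4 4)) / hbar ^ 2). intro k.
    unfold Q_term. apply bound_gen; auto.
    + assert (1 <= INR (fact k)) by (apply (le_INR 1), lt_O_fact). nra.
    + rewrite Rpow_mult_distr. eapply Rle_trans; [apply n1_mul|].
      apply Rmult_le_compat; try apply n1_ge0; apply n1_pow.
  -
    replace ((INR (n_of NM58) - 1) / 2) with (INR 1 + 1) by (simpl; field).
    rewrite (proj2 (Gamma_nat 1)). simpl. lra.
  - intro k. unfold Q_term, besselI_reg_term. change (n_of NM58 + 1)%nat with 6%nat.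
    rewrite x58, !Cpow_scale, !Cscale_scale. apply Cscale_eq.
    replace ((INR (n_of NM58) - 1) / 2) with (INR 1 + 1) by (simpl; field).
    replace (INR k + (INR (n_of NM58) - 3) / 2 + 1) with (INR (S k) + 1) by (rewrite S_INR; simpl; field).
    rewrite (proj2 (Gamma_nat 1)), (proj2 (Gamma_nat (S k))).
    replace (k + 1)%nat with (S k) by lia.
    rewrite !pow_inv, Rpow_mult_distr, pow_mult.
    assert (Ht : 0 < 2 ^ k) by (apply pow_lt; lra).
    assert (Hhk : 0 < (hbar ^ 2) ^ k) by (apply pow_lt; nra).
    pose proof (INR_fact_lt_0 k). pose proof (INR_fact_lt_0 (S k)). simpl (INR (fact 1)). field. repeat split; lra.
  - exists (n1 (varrho z w) / hbar ^ 2). intro k.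
    unfold Q_term. apply bound_gen; auto.
    + assert (1 <= INR (fact (k + 1))) by (apply (le_INR 1), lt_O_fact). pose proof (INR_fact_lt_0 k). nra.
    + apply n1_pow.
Qed.
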